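(* Let $(X,d)$ be a ubiquitously amenable and uniformly locally finite extended metric space. Then for all $r,\varepsilon>0$ there exists $S>0$ such that for every finite nonempty $M\subseteq X$ there is a finite set $F$ with $M\subseteq F\subseteq\bar B(M,S)$ and $|\partial^+_rF|\le\varepsilon|F|$.
   Context: An extended metric may take the value $\infty$. $\bar B(A,R)=\{x:d(x,A)\le R\}$. $(X,d)$ is uniformly locally finite if $\sup_{x\in X}|\bar B(x,R)|<\infty$ for every $R>0$. Outer boundary: $\partial^+_RA=\{x\in X\setminus A:d(x,A)\le R\}$; $R$-boundary: $\partial_RA=\{x\in X:d(x,A)\le R\text{ and }d(x,X\setminus A)\le R\}$. A finite nonempty $F$ is $(R,\varepsilon)$-Følner if $|\partial_RF|\le\varepsilon|F|$. $(X,d)$ is ubiquitously amenable if for all $R,\varepsilon>0$ there is $S>0$ such that every ball $\bar B(x,S)$, $x\in X$, contains an $(R,\varepsilon)$-Følner set. *)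

(* Defs.v *)
(* concrete reals R, extended distances as option R (None = +oo). *)
From Stdlib Require Import Reals List.
Import ListNotations.
Open Scope R_scope.

Definition ele (v : option R) (r : R) : Prop :=
  match v with Some a => a <= r | None => False end.
Definition elt (v : option R) (r : R) : Prop :=
  match v with Some a => a < r | None => False end.
Definition eadd (u v : option R) : option R :=
  match u, v with Some a, Some b => Some (a + b) | _, _ => None end.
Definition ele2 (u v : option R) : Prop :=
  match u, v with
  | Some a, Some b => a <= b
  | _, None => True
  | None, Some _ => False
  end.

Record ext_metric (X : Type) (d : X -> X -> option R) : Prop := {
  em_nonneg : forall x y a, d x y = Some a -> 0 <= a;
  em_refl : forall x, d x x = Some 0;
  em_sep : forall x y, d x y = Some 0 -> x = y;
  em_sym : forall x y, d x y = d y x;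
  em_tri : forall x y z, ele2 (d x z) (eadd (d x y) (d y z))
}.

(* Subsets of X are predicates; "d(x,A) <= r" means inf_{a in A} d(x,a) <= r *)
Definition dist_le {X} (d : X -> X -> option R) (x : X) (A : X -> Prop) (r : R) : Prop :=
  forall e, 0 < e -> exists a, A a /\ elt (d x a) (r + e).

Definition card_le {X} (A : X -> Prop) (n : R) : Prop :=
  forall L : list X, NoDup L -> (forall x, In x L -> A x) -> INR (length L) <= n.

(* Finite sets are represented by duplicate-free lists; |F| = length F. *)
Definition closed_ball {X} (d : X -> X -> option R) (x : X) (R0 : R) : X -> Prop :=
  fun y => ele (d y x) R0.

Definition unif_loc_finite {X} (d : X -> X -> option R) : Prop :=
  forall R0, 0 < R0 -> exists N : nat, forall x, card_le (closed_ball d x R0) (INR N).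

Definition outer_boundary {X} (d : X -> X -> option R) (R0 : R) (F : list X) : X -> Prop :=
  fun x => ~ In x F /\ dist_le d x (fun y => In y F) R0.

Definition boundary {X} (d : X -> X -> option R) (R0 : R) (F : list X) : X -> Prop :=
  fun x => dist_le d x (fun y => In y F) R0 /\ dist_le d x (fun y => ~ In y F) R0.

Definition folner {X} (d : X -> X -> option R) (R0 eps : R) (F : list X) : Prop :=
  NoDup F /\ F <> [] /\ card_le (boundary d R0 F) (eps * INR (length F)).

Definition ubiq_amenable {X} (d : X -> X -> option R) : Prop :=
  forall R0 eps, 0 < R0 -> 0 < eps -> exists S, 0 < S /\
    forall x, exists F, folner d R0 eps F /\ (forall y, In y F -> closed_ball d x S y).

(* Main.v *)
Require Import Defs.
From Stdlib Require Import Reals List Lra Lia Classical IndefiniteDescription ZArith.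
Import ListNotations.
Open Scope R_scope.

Lemma nat_unbounded (x : R) : exists n : nat, x < INR n.
Proof.
  destruct (archimed x) as [H1 _].
  exists (Z.abs_nat (up x)). rewrite INR_IZR_INZ, Zabs2Nat.id_abs.
  assert (IZR (up x) <= IZR (Z.abs (up x))) by (apply IZR_le; lia).
  lra.
Qed.

Lemma bernoulli (e : R) (n : nat) : 0 <= e -> 1 + INR n * e <= (1 + e) ^ n.
Proof.
  intros He. induction n as [|n IH].
  - simpl. lra.
  - rewrite S_INR. simpl. pose proof (pos_INR n). nra.
Qed.

Lemma card_le_mono {X} (A B : X -> Prop) c :
  (forall x, A x -> B x) -> card_le B c -> card_le A c.
Proof. intros H HB L HL HA. apply HB; auto. Qed.

Lemma card_le_weaken {X} (A : X -> Prop) c c' : c <= c' -> card_le A c -> card_le A c'.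
Proof. intros H HA L HL HLA. specialize (HA L HL HLA). lra. Qed.

Lemma split_list {X} (A B : X -> Prop) (L : list X) :
  NoDup L -> (forall x, In x L -> A x \/ B x) ->
  exists L1 L2, NoDup L1 /\ NoDup L2 /\ (forall x, In x L1 -> A x /\ In x L) /\
    (forall x, In x L2 -> B x /\ In x L) /\ length L = (length L1 + length L2)%nat.
Proof.
  induction L as [|a L IH]; intros HN HL.
  - exists [], []. split; [constructor|]. split; [constructor|].
    split; [intros x []|]. split; [intros x []|]. reflexivity.
  - inversion HN as [|a0 l0 Hnot HN']; subst a0 l0.
    destruct IH as (L1 & L2 & N1 & N2 & H1 & H2 & Hl); auto.
    { intros; apply HL; simpl; auto. }
    destruct (classic (A a)) as [Ha|Ha].
    + exists (a::L1), L2. split; [|split; [|split; [|split]]].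
      * constructor; auto. intro Hin. apply H1 in Hin. tauto.
      * auto.
      * intros x [<-|Hx]; simpl; auto. apply H1 in Hx; tauto.
      * intros x Hx. apply H2 in Hx; simpl; tauto.
      * simpl. lia.
    + assert (Hb : B a) by (destruct (HL a (or_introl eq_refl)); tauto).
      exists L1, (a::L2). split; [|split; [|split; [|split]]].
      * auto.
      * constructor; auto. intro Hin. apply H2 in Hin. tauto.
      * intros x Hx. apply H1 in Hx; simpl; tauto.
      * intros x [<-|Hx]; simpl; auto. apply H2 in Hx; tauto.
      * simpl. lia.
Qed.

Lemma card_le_union {X} (A B : X -> Prop) a b :
  card_le A a -> card_le B b -> card_le (fun x => A x \/ B x) (a + b).
Proof.
  intros HA HB L HL HLAB.
  destruct (split_list A B L HL HLAB) as (L1 & L2 & N1 & N2 & H1 & H2 & Hl).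
  rewrite Hl, plus_INR. apply Rplus_le_compat.
  - apply HA; auto. intros x Hx; apply H1; auto.
  - apply HB; auto. intros x Hx; apply H2; auto.
Qed.

Lemma card_le_big {X} (P : X -> X -> Prop) (L : list X) c :
  (forall u, In u L -> card_le (P u) c) ->
  card_le (fun x => exists u, In u L /\ P u x) (c * INR (length L)).
Proof.
  induction L as [|a L IH]; intros H.
  - intros L' HL' HA. destruct L' as [|y L''].
    + simpl. lra.
    + destruct (HA y (or_introl eq_refl)) as (u & [] & _).
  - replace (c * INR (length (a::L))) with (c + c * INR (length L))
      by (simpl length; rewrite S_INR; ring).
    eapply card_le_mono.
    2: { apply card_le_union. apply (H a (or_introl eq_refl)).
         apply IH. intros u Hu; apply H; simpl; auto. }
    intros x (u & [<-|Hu] & Hp); [left|right]; eauto.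
Qed.

Lemma enum_exists {X} (A : X -> Prop) (n : nat) :
  card_le A (INR n) -> exists E, NoDup E /\ forall x, In x E <-> A x.
Proof.
  intros HA.
  assert (G : forall m, (exists L, NoDup L /\ (forall x, In x L -> A x) /\ length L = m)
     \/ (exists E, NoDup E /\ forall x, In x E <-> A x)).
  { induction m as [|m IH].
    - left. exists []. repeat split; try constructor. intros x [].
    - destruct IH as [(L & HL & HLA & Hlen)|Hr]; [|right; exact Hr].
      destruct (classic (forall x, A x -> In x L)) as [Hc|Hc].
      + right. exists L. split; auto. intro x; split; auto.
      + left. apply not_all_ex_not in Hc. destruct Hc as [x Hx].
        apply imply_to_and in Hx. destruct Hx as [Ax Nx].
        exists (x::L). split. constructor; auto. split.
        intros y [<-|Hy]; auto. simpl; lia. }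
  destruct (G (S n)) as [(L & HL & HLA & Hlen)|Hr]; auto.
  exfalso. pose proof (HA L HL HLA) as H. rewrite Hlen, S_INR in H. lra.
Qed.

Lemma card_le_list {X} (A : X -> Prop) (E : list X) :
  NoDup E -> (forall x, A x -> In x E) -> card_le A (INR (length E)).
Proof.
  intros HE HA L HL HLA. apply le_INR. apply NoDup_incl_length; auto.
  intros x Hx; auto.
Qed.

Lemma nodupify {X} (L : list X) : exists L', NoDup L' /\ forall x, In x L' <-> In x L.
Proof.
  induction L as [|a L (L' & HN & HL)].
  - exists []. split. constructor. tauto.
  - destruct (classic (In a L')) as [Ha|Ha].
    + exists L'. split; auto. intro x; split; intro Hx.
      * right; apply HL; auto.
      * destruct Hx as [<-|Hx]; auto. apply HL; auto.
    + exists (a::L'). split. constructor; auto. intro x; simpl; rewrite HL; tauto.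
Qed.

Lemma fin_dist {X} (d : X -> X -> option R) x (L : list X) t :
  dist_le d x (fun y => In y L) t -> exists a, In a L /\ ele (d x a) t.
Proof.
  intros H. apply NNPP; intro Hn.
  assert (Hg : exists e, 0 < e /\ forall a, In a L -> ~ elt (d x a) (t + e)).
  { clear H. revert Hn. induction L as [|b L IH]; intros Hn.
    - exists 1; split; [lra| intros a []].
    - destruct IH as (e & He & Hall).
      { intros (a & Ha & Hd); apply Hn; exists a; split; simpl; auto. }
      destruct (d x b) as [v|] eqn:Hb.
      + assert (v > t).
        { destruct (Rle_lt_dec v t) as [Hle|Hlt]; auto. exfalso; apply Hn.
          exists b; split; simpl; auto. rewrite Hb; simpl; auto. }
        exists (Rmin e (v - t)). split. apply Rmin_glb_lt; lra.
        intros a [<-|Ha].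
        * rewrite Hb; simpl. pose proof (Rmin_r e (v - t)); lra.
        * intro Hc. apply (Hall a Ha). destruct (d x a); simpl in *; auto.
          pose proof (Rmin_l e (v - t)); lra.
      + exists e; split; auto. intros a [<-|Ha].
        * rewrite Hb; simpl; auto.
        * apply Hall; auto. }
  destruct Hg as (e & He & Hall). destruct (H e He) as (a & Ha & Hd).
  apply (Hall a Ha Hd).
Qed.

Lemma ele_dist {X} (d : X -> X -> option R) x (A : X -> Prop) a t :
  A a -> ele (d x a) t -> dist_le d x A t.
Proof.
  intros Ha Hd e He. exists a. split; auto. destruct (d x a); simpl in *; auto; lra.
Qed.

Lemma ele_mono (v : option R) a b : a <= b -> ele v a -> ele v b.
Proof. destruct v; simpl; auto; lra. Qed.

Lemma ele_tri {X} d (Hm : ext_metric X d) x y z a b :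
  ele (d x y) a -> ele (d y z) b -> ele (d x z) (a + b).
Proof.
  intros H1 H2. pose proof (em_tri _ _ Hm x y z) as T.
  destruct (d x y) as [u|]; [|destruct H1].
  destruct (d y z) as [v|]; [|destruct H2].
  simpl in *. destruct (d x z); simpl in *; lra.
Qed.

Lemma ele_sym {X} d (Hm : ext_metric X d) (x y : X) a : ele (d x y) a -> ele (d y x) a.
Proof. rewrite (em_sym _ _ Hm). auto. Qed.

Lemma ele_refl {X} d (Hm : ext_metric X d) (x : X) a : 0 <= a -> ele (d x x) a.
Proof. rewrite (em_refl _ _ Hm). simpl. auto. Qed.

Definition nb {X} (d : X -> X -> option R) (M : list X) (t : R) (x : X) : Prop :=
  exists m, In m M /\ ele (d x m) t.

Theorem proposition3p5 (X : Type) (d : X -> X -> option R) :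
  ext_metric X d -> ubiq_amenable d -> unif_loc_finite d ->
  forall r eps, 0 < r -> 0 < eps ->
  exists S, 0 < S /\
    forall M : list X, M <> [] ->
      exists F : list X, NoDup F /\
        (forall x, In x M -> In x F) /\
        (forall x, In x F -> dist_le d x (fun y => In y M) S) /\
        card_le (outer_boundary d r F) (eps * INR (length F)).
Proof.
  intros Hm Hua Hulf r eps Hr He.
  destruct (Hulf r Hr) as [N0 HN0].
  destruct (Hua r (eps/2) Hr ltac:(lra)) as (S1 & HS1 & HF).
  destruct (Hulf S1 HS1) as [N1 HN1].
  assert (HJ : exists J : nat, 2 * INR N0 * INR N1 < eps * (1 + eps) ^ J).
  { destruct (nat_unbounded (2 * INR N0 * INR N1 / (eps * eps))) as [J HJ].
    exists J. pose proof (bernoulli eps J ltac:(lra)).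
    assert (2 * INR N0 * INR N1 < INR J * (eps * eps)).
    { apply (Rmult_lt_compat_r (eps * eps)) in HJ; [|nra].
      unfold Rdiv in HJ. rewrite Rmult_assoc, Rinv_l in HJ; nra. }
    nra. }
  destruct HJ as [J HJ].
  pose proof (pos_INR J) as HJpos.
  set (T := INR J * r + S1).
  exists T. split. { unfold T; nra. }
  intros M HM.
  assert (Hcard : forall t, exists n : nat, card_le (nb d M t) (INR n)).
  { intro t. destruct (Hulf (Rmax t 1) ltac:(pose proof (Rmax_r t 1); lra)) as [Nt HNt].
    exists (Nt * length M)%nat. rewrite mult_INR.
    eapply card_le_mono. 2: { apply (card_le_big (fun m => closed_ball d m (Rmax t 1))).
      intros u _. apply HNt. }
    intros x (m & Hm1 & Hm2). exists m. split; auto. unfold closed_ball.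
    eapply ele_mono; [|exact Hm2]. apply Rmax_l. }
  assert (Henum : forall j : nat, exists E, NoDup E /\ forall x, In x E <-> nb d M (INR j * r) x).
  { intro j. destruct (Hcard (INR j * r)) as [n Hn]. eapply enum_exists; eauto. }
  pose (E := fun j => proj1_sig (constructive_indefinite_description _ (Henum j))).
  assert (HE : forall j, NoDup (E j) /\ forall x, In x (E j) <-> nb d M (INR j * r) x).
  { intro j. exact (proj2_sig (constructive_indefinite_description _ (Henum j))). }
  clearbody E.
  pose (b := fun j => INR (length (E j))).
  assert (HMin : forall j x, In x M -> In x (E j)).
  { intros j x Hx. apply (proj2 (HE j)). exists x. split; auto.
    apply ele_refl; auto. pose proof (pos_INR j); nra. }
  destruct (classic (exists j, (j < J)%nat /\ b (S j) <= (1 + eps) * b j)) as [(j & Hj & Hb)|Hnot].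
  -
    exists (E j). split; [apply HE|]. split; [auto|]. split.
    + intros x Hx. apply (proj2 (HE j)) in Hx. destruct Hx as (m & Hm1 & Hm2).
      apply (ele_dist d x _ m); auto. eapply ele_mono; [|exact Hm2].
      apply lt_INR in Hj. unfold T. nra.
    + intros L HL HLo.
      assert (Hsub : (length (L ++ E j) <= length (E (S j)))%nat).
      { apply NoDup_incl_length.
        - apply NoDup_app; auto. apply HE. intros a Ha Hin. apply (HLo a Ha). auto.
        - intros x Hx. apply (proj2 (HE (S j))). apply in_app_or in Hx. destruct Hx as [Hx|Hx].
          + destruct (HLo x Hx) as [Hn Hd]. apply fin_dist in Hd. destruct Hd as (a & Ha & Hda).
            apply (proj2 (HE j)) in Ha. destruct Ha as (m & Hm1 & Hm2).
            exists m. split; auto. rewrite S_INR.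
            replace ((INR j + 1) * r) with (r + INR j * r) by ring.
            eapply ele_tri; eauto.
          + apply (proj2 (HE j)) in Hx. destruct Hx as (m & Hm1 & Hm2).
            exists m. split; auto. eapply ele_mono; [|exact Hm2]. rewrite S_INR. nra. }
      rewrite length_app in Hsub. apply le_INR in Hsub. rewrite plus_INR in Hsub.
      unfold b in Hb. lra.
  -
    assert (Hgrow : forall j, (j <= J)%nat -> b j >= (1 + eps) ^ j * b O).
    { induction j as [|j IH]; intros Hj.
      - simpl. lra.
      - assert (Hl : ~ (b (S j) <= (1 + eps) * b j)).
        { intro Hc. apply Hnot. exists j. split; [lia|auto]. }
        specialize (IH ltac:(lia)). simpl. pose proof (pos_INR (length (E O))).
        assert (0 <= (1 + eps) ^ j) by (apply pow_le; lra). unfold b in *. nra. }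
    assert (G : forall Y' : list X, (forall y, In y Y' -> nb d M (INR J * r) y) ->
      exists U, NoDup U /\ (forall u, In u U -> exists m, In m M /\ ele (d u m) T) /\
        card_le (outer_boundary d r U) (eps / 2 * INR (length U)) /\
        (forall y, In y Y' -> exists u, In u U /\ ele (d y u) S1)).
    { induction Y' as [|y Y' IH]; intros HY.
      - exists []. split. constructor. split. intros u []. split.
        + intros L HL HLo. destruct L as [|x L]. simpl; lra.
          destruct (HLo x (or_introl eq_refl)) as [_ Hd]. apply fin_dist in Hd.
          destruct Hd as (a & [] & _).
        + intros y [].
      - destruct IH as (U & HU1 & HU2 & HU3 & HU4). { intros; apply HY; simpl; auto. }
        destruct (classic (exists u, In u U /\ ele (d y u) S1)) as [Hex|Hnex].
        + exists U. repeat split; auto. intros y0 [<-|Hy0]; auto.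
        + destruct (HF y) as (Gs & (HGN & HGne & HGb) & HGin).
          exists (Gs ++ U). split; [|split; [|split]].
          * apply NoDup_app; auto. intros a Ha HaU. apply Hnex. exists a. split; auto.
            apply ele_sym; auto. apply HGin; auto.
          * intros u Hu. apply in_app_or in Hu. destruct Hu as [Hu|Hu]; auto.
            destruct (HY y (or_introl eq_refl)) as (m & Hm1 & Hm2).
            exists m. split; auto. unfold T. rewrite Rplus_comm.
            eapply ele_tri; eauto. apply HGin; auto.
          * rewrite length_app, plus_INR, Rmult_plus_distr_l.
            eapply card_le_mono. 2: { apply card_le_union; [exact HGb|exact HU3]. }
            intros x [Hx Hd]. apply fin_dist in Hd. destruct Hd as (a & Ha & Hda).
            apply in_app_or in Ha. destruct Ha as [Ha|Ha].
            -- left. split.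
               ++ eapply ele_dist; eauto.
               ++ apply (ele_dist d x _ x). intro Hin; apply Hx; apply in_or_app; auto.
                  apply ele_refl; auto; lra.
            -- right. split. intro Hin; apply Hx; apply in_or_app; auto.
               eapply ele_dist; eauto.
          * intros y0 [<-|Hy0].
            -- destruct Gs as [|g Gs']; [congruence|]. exists g. split; simpl; auto.
               apply ele_sym; auto. apply HGin; simpl; auto.
            -- destruct (HU4 y0 Hy0) as (u & Hu & Hdu). exists u. split; auto.
               apply in_or_app; auto. }
    destruct (G (E J)) as (U & HU1 & HU2 & HU3 & HU4). { intros y Hy; apply HE; auto. }
    assert (HbJ : b J <= INR N1 * INR (length U)).
    { unfold b. apply card_le_big with (P := fun u => closed_ball d u S1) (L := U).
      - intros u _. apply HN1.
      - apply HE.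
      - intros x Hx. destruct (HU4 x Hx) as (u & Hu & Hdu). exists u. split; auto. }
    destruct (nodupify M) as (M' & HM'N & HM').
    assert (HM'b : INR (length M') <= b O).
    { unfold b. apply le_INR. apply NoDup_incl_length; auto. intros x Hx.
      apply HMin. apply HM'; auto. }
    assert (Hb0 : 1 <= b O).
    { destruct M as [|m M0]; [congruence|]. unfold b.
      destruct (E O) as [|z Z] eqn:HEO.
      - exfalso. specialize (HMin O m (or_introl eq_refl)). rewrite HEO in HMin. destruct HMin.
      - simpl length. rewrite S_INR. pose proof (pos_INR (length Z)). lra. }
    destruct (nodupify (M ++ U)) as (F & HFN & HFm).
    exists F. split; auto. split.
    { intros x Hx. apply HFm. apply in_or_app; auto. }
    split.
    { intros x Hx. apply HFm in Hx. apply in_app_or in Hx. destruct Hx as [Hx|Hx].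
      - apply (ele_dist d x _ x); auto. apply ele_refl; auto. unfold T; nra.
      - destruct (HU2 x Hx) as (m & Hm1 & Hm2). eapply ele_dist; eauto. }
    assert (HUF : INR (length U) <= INR (length F)).
    { apply le_INR. apply NoDup_incl_length; auto. intros x Hx. apply HFm. apply in_or_app; auto. }
    eapply card_le_weaken.
    2: { eapply card_le_mono.
         2: { apply card_le_union.
              - apply (card_le_big (fun u => closed_ball d u r) M').
                intros u _. apply HN0.
              - exact HU3. }
         intros x [Hx Hd]. apply fin_dist in Hd. destruct Hd as (a & Ha & Hda).
         apply HFm in Ha. apply in_app_or in Ha. destruct Ha as [Ha|Ha].
         - left. exists a. split; auto. apply HM'; auto.
         - right. split. intro Hin; apply Hx; apply HFm; apply in_or_app; auto.
           eapply ele_dist; eauto. }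
    specialize (Hgrow J (le_n J)).
    pose proof (pos_INR N0). pose proof (pos_INR N1).
    set (P := (1 + eps) ^ J) in *.
    set (u := INR (length U)) in *. set (m' := INR (length M')) in *.
    set (f := INR (length F)) in *.
    assert (Hkey : 2 * INR N0 * b O < eps * u).
    { assert (2 * INR N0 * INR N1 * b O < eps * P * b O) by nra.
      assert (eps * P * b O <= eps * (INR N1 * u)) by nra.
      destruct (Req_dec (INR N1) 0) as [Z|Z].
      - rewrite Z in *. nra.
      - nra. }
    nra.
Qed.
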